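(* Let $\mathbf f=(f_1,\dots,f_n)\in\mathcal G_0^n$. (a) $\mathbf f^*\in\mathcal G_0^n$, $R[\mathbf f^*]$ is the reversed digraph $R[\mathbf f]^{-1}=\{(j,i):(i,j)\in R[\mathbf f]\}$, and $\mathbf f^*$ is generic (resp. strongly generic) if $\mathbf f$ is. (b) $\mathbf f\odot\mathbf f\in\mathcal G_0^n$, $R[\mathbf f\odot\mathbf f]=R[\mathbf f]$, and $\mathbf f\odot\mathbf f$ is generic (resp. strongly generic) if $\mathbf f$ is. (c) If $\mathbf g\in\mathcal G_{00}^n$, then $\mathbf g\odot\mathbf f\in\mathcal G_0^n$, $R[\mathbf g\odot\mathbf f]=R[\mathbf f]$, and $\mathbf g\odot\mathbf f$ is generic (resp. strongly generic) if $\mathbf f$ is. (d) If $h\in\mathcal G$, then $\rho_h\mathbf f\in\mathcal G^n$ and $R[\rho_h\mathbf f]=R[\mathbf f]$. (e) If $\pi$ is a permutation of $[n]$, then $\pi\mathbf f\in\mathcal G_0^n$, $R[\pi\mathbf f]=\pi R[\mathbf f]$, and $\pi\mathbf f$ is generic (resp. strongly generic) if $\mathbf f$ is.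
   Context: $\mathcal G$ is the group of strictly increasing continuous maps $f:[-1,1]\to[-1,1]$ with $f(\pm1)=\pm1$; $i$ the identity; $\mathcal G_0=\{f\in\mathcal G:\int_{-1}^1f=0\}$; $\mathcal G_{00}$ the odd elements of $\mathcal G$. $f^*(t)=-f(-t)$, $f^e(t)=\tfrac12(f(t)+f(-t))$, $Q(f,g)=\int_{-1}^1f(g^{-1}(t))\,dt$. For $f_1,f_2\in\mathcal G$, $f_1\odot f_2(t)=\tfrac12(f_1(2t+1)-1)$ for $t\in[-1,0]$ and $\tfrac12(f_2(2t-1)+1)$ for $t\in[0,1]$. For $\mathbf f,\mathbf g\in\mathcal G^n$, $h\in\mathcal G$, $\pi$ a permutation of $[n]$: $\mathbf f^*=(f_1^*,\dots,f_n^* )$, $\mathbf g\odot\mathbf f=(g_1\odot f_1,\dots,g_n\odot f_n)$, $\rho_h\mathbf f=(f_1\circ h,\dots,f_n\circ h)$, $\pi\mathbf f=(f_{\pi^{-1}1},\dots,f_{\pi^{-1}n})$. For a digraph $R$ on $[n]$, $\pi R=\{(\pi i,\pi j):(i,j)\in R\}$. $R[\mathbf f]$ is the digraph on $[n]$ with $(i,j)\in R[\mathbf f]$ iff $Q(f_j,f_i)>0$. $\mathbf f\in\mathcal G_0^n$ is generic if $\{i,f_1,\dots,f_n\}$ is linearly independent and $Q(f_i,f_j)\neq0$ for $i\neq j$; strongly generic if $\{f_1^e,\dots,f_n^e\}$ is linearly independent and $Q(f_i,f_j)\neq0$ for $i\ne j$. *)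

(* Defs.v *)
From Stdlib Require Import Reals ClassicalEpsilon.
From Coquelicot Require Import Coquelicot.
From mathcomp Require Import all_boot fingroup perm.

Set Implicit Arguments.
Unset Strict Implicit.
Unset Printing Implicit Defensive.

Local Open Scope R_scope.

Definition I11 (t : R) : Prop := -1 <= t <= 1.

(* f : [-1,1] -> [-1,1] continuous, strictly increasing, f(-1) = -1, f 1 = 1.
   Functions are modelled as R -> R; only their values on [-1,1] matter. *)
Definition inG (f : R -> R) : Prop :=
  (forall t, I11 t -> I11 (f t)) /\
  (forall t, I11 t -> forall eps, 0 < eps -> exists delta, 0 < delta /\
      forall s, I11 s -> Rabs (s - t) < delta -> Rabs (f s - f t) < eps) /\
  (forall s t, I11 s -> I11 t -> s < t -> f s < f t) /\
  f (-1) = -1 /\ f 1 = 1.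

Definition inG0 (f : R -> R) : Prop := inG f /\ RInt f (-1) 1 = 0.

Definition inG00 (f : R -> R) : Prop := inG f /\ forall t, I11 t -> f (- t) = - f t.

Definition fstar (f : R -> R) : R -> R := fun t => - f (- t).

Definition feven (f : R -> R) : R -> R := fun t => (f t + f (- t)) / 2.

Definition ginv (g : R -> R) (t : R) : R :=
  epsilon (inhabits 0) (fun s => I11 s /\ g s = t).

Definition Q (f g : R -> R) : R := RInt (fun t => f (ginv g t)) (-1) 1.

Definition odot (f1 f2 : R -> R) : R -> R :=
  fun t => if Rle_dec t 0 then (f1 (2 * t + 1) - 1) / 2
           else (f2 (2 * t - 1) + 1) / 2.

Definition vec (n : nat) := 'I_n -> R -> R.

Definition inGn n (f : vec n) : Prop := forall i, inG (f i).
Definition inG0n n (f : vec n) : Prop := forall i, inG0 (f i).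
Definition inG00n n (f : vec n) : Prop := forall i, inG00 (f i).

Definition vstar n (f : vec n) : vec n := fun i => fstar (f i).
Definition vodot n (g f : vec n) : vec n := fun i => odot (g i) (f i).
Definition rho n (h : R -> R) (f : vec n) : vec n := fun i => fun t => f i (h t).
Definition pvec n (pi : 'S_n) (f : vec n) : vec n := fun i => f ((pi^-1)%g i).

Definition digraph (n : nat) := 'I_n -> 'I_n -> Prop.
Definition Rdig n (f : vec n) : digraph n := fun i j => Q (f j) (f i) > 0.
Definition rev_dig n (D : digraph n) : digraph n := fun i j => D j i.
Definition perm_dig n (pi : 'S_n) (D : digraph n) : digraph n :=
  fun a b => exists i j, D i j /\ a = pi i /\ b = pi j.
Definition dig_eq n (D1 D2 : digraph n) : Prop := forall i j, D1 i j <-> D2 i j.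

Definition Qnonzero n (f : vec n) : Prop :=
  forall i j : 'I_n, i <> j -> Q (f i) (f j) <> 0.

Definition generic n (f : vec n) : Prop :=
  (forall (c0 : R) (c : 'I_n -> R),
     (forall t, I11 t -> c0 * t + \big[Rplus/0]_(k < n) (c k * f k t) = 0) ->
     c0 = 0 /\ forall k, c k = 0) /\
  Qnonzero f.

Definition strongly_generic n (f : vec n) : Prop :=
  (forall c : 'I_n -> R,
     (forall t, I11 t -> \big[Rplus/0]_(k < n) (c k * feven (f k) t) = 0) ->
     forall k, c k = 0) /\
  Qnonzero f.

(* Main.v *)
From HB Require Import structures.
Require Import Defs.
From Stdlib Require Import Reals Lra Lia ClassicalEpsilon.
From Coquelicot Require Import Coquelicot.
From mathcomp Require Import all_boot fingroup perm.
Local Open Scope R_scope.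

Definition maps (f : R -> R) := forall t, I11 t -> I11 (f t).
Definition relcont (f : R -> R) := forall t, I11 t -> forall eps, 0 < eps -> exists delta, 0 < delta /\
      forall s, I11 s -> Rabs (s - t) < delta -> Rabs (f s - f t) < eps.
Definition smono (f : R -> R) := forall s t, I11 s -> I11 t -> s < t -> f s < f t.
Definition gcont (f : R -> R) := forall t eps, 0 < eps -> exists delta, 0 < delta /\
      forall s, Rabs (s - t) < delta -> Rabs (f s - f t) < eps.
Definition clamp t := Rmax (-1) (Rmin 1 t).

Lemma clamp_I11 t : I11 (clamp t).
Proof. unfold clamp, I11, Rmax, Rmin; repeat destruct Rle_dec; lra. Qed.
Lemma clamp_id t : I11 t -> clamp t = t.
Proof. unfold clamp, I11, Rmax, Rmin; repeat destruct Rle_dec; lra. Qed.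
Lemma clamp_lip s t : Rabs (clamp s - clamp t) <= Rabs (s - t).
Proof. unfold clamp, Rmax, Rmin; repeat destruct Rle_dec; unfold Rabs; repeat destruct Rcase_abs; lra. Qed.

Lemma relcont_gcont f : relcont f -> gcont (fun t => f (clamp t)).
Proof.
  intros H x eps He. destruct (H (clamp x) (clamp_I11 x) eps He) as [d [Hd Hs]].
  exists d; split; auto. intros s Hsx. apply Hs. apply clamp_I11.
  eapply Rle_lt_trans; [apply clamp_lip|]; auto.
Qed.

Lemma gcont_relcont f : gcont f -> relcont f.
Proof.
  intros H x _ eps He. destruct (H x eps He) as [d [Hd Hs]].
  exists d; split; auto.
Qed.

Lemma relcont_ext f g : (forall t, I11 t -> f t = g t) -> relcont f -> relcont g.
Proof.
  intros E H x Hx eps He. destruct (H x Hx eps He) as [d [Hd Hs]].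
  exists d; split; auto. intros s Hs1 Hs2. rewrite <- !E; auto.
Qed.

Lemma relcont_comp f g : relcont f -> relcont g -> maps g -> relcont (fun t => f (g t)).
Proof.
  intros Hf Hg Mg x Hx eps He.
  destruct (Hf (g x) (Mg x Hx) eps He) as [d [Hd Hs]].
  destruct (Hg x Hx d Hd) as [d' [Hd' Hs']].
  exists d'; split; auto.
Qed.

Lemma gcont_plus f g : gcont f -> gcont g -> gcont (fun t => f t + g t).
Proof.
  intros Hf Hg x eps He.
  destruct (Hf x (eps/2)) as [d1 [Hd1 H1]]; [lra|].
  destruct (Hg x (eps/2)) as [d2 [Hd2 H2]]; [lra|].
  exists (Rmin d1 d2); split. apply Rmin_pos; auto.
  intros s Hs. 
  assert (A1 := H1 s (Rlt_le_trans _ _ _ Hs (Rmin_l _ _))).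
  assert (A2 := H2 s (Rlt_le_trans _ _ _ Hs (Rmin_r _ _))).
  replace (f s + g s - (f x + g x)) with ((f s - f x) + (g s - g x)) by ring.
  eapply Rle_lt_trans. apply Rabs_triang. lra.
Qed.

Lemma gcont_aff f v m : gcont f -> gcont (fun s => (f (2*s+v) + m)/2).
Proof.
  intros Hf x eps He.
  destruct (Hf (2*x+v) (2*eps)) as [d [Hd H]]; [lra|].
  exists (d/2); split; [lra|]. intros s Hs.
  assert (A := H (2*s+v)).
  replace (2*s+v - (2*x+v)) with (2*(s-x)) in A by ring.
  rewrite Rabs_mult Rabs_right in A; [|lra].
  replace ((f (2 * s + v) + m) / 2 - (f (2 * x + v) + m) / 2) with ((f (2 * s + v) - f (2*x+v)) /2) by field.
  unfold Rdiv; rewrite Rabs_mult (Rabs_right (/2)); [|apply Rle_ge; left; apply Rinv_0_lt_compat; lra].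
  assert (A' := A ltac:(lra)). lra.
Qed.

Lemma gcont_continuous f x : gcont f -> continuous f x.
Proof.
  intros H. apply continuity_pt_filterlim.
  unfold continuity_pt, continue_in, limit1_in, limit_in; simpl; unfold R_dist.
  intros eps He. destruct (H x eps He) as [d [Hd Hs]]. exists d; split; auto.
  intros s [_ Hsx]. auto.
Qed.

Lemma gcont_continuity f : gcont f -> continuity f.
Proof.
  intros H x. unfold continuity_pt, continue_in, limit1_in, limit_in; simpl; unfold R_dist.
  intros eps He. destruct (H x eps He) as [d [Hd Hs]]. exists d; split; auto.
  intros s [_ Hsx]. auto.
Qed.

Lemma relcont_ex_RInt f a b : relcont f -> I11 a -> I11 b -> ex_RInt f a b.
Proof.
  intros H Ha Hb.
  apply (ex_RInt_ext (fun t => f (clamp t))).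
  { intros x Hx. rewrite clamp_id; auto. unfold I11 in *.
    revert Hx; unfold Rmin, Rmax; destruct Rle_dec; lra. }
  apply (@ex_RInt_continuous R_CompleteNormedModule). intros z _. apply gcont_continuous, relcont_gcont, H.
Qed.
Lemma inG_unfold f : inG f <-> (maps f /\ relcont f /\ smono f /\ f (-1) = -1 /\ f 1 = 1).
Proof. reflexivity. Qed.

Lemma inG_maps f : inG f -> maps f. Proof. intros (?&?&?&?&?); assumption. Qed.
Lemma inG_relcont f : inG f -> relcont f. Proof. intros (?&?&?&?&?); assumption. Qed.
Lemma inG_smono f : inG f -> smono f. Proof. intros (?&?&?&?&?); assumption. Qed.
Lemma inG_m1 f : inG f -> f (-1) = -1. Proof. intros (?&?&?&?&?); assumption. Qed.
Lemma inG_p1 f : inG f -> f 1 = 1. Proof. intros (?&?&?&?&?); assumption. Qed.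

Lemma smono_le f s t : smono f -> I11 s -> I11 t -> s <= t -> f s <= f t.
Proof. intros H Hs Ht [Hlt|Heq]. left; auto. subst; lra. Qed.

Lemma ginv_unique h s t : smono h -> I11 s -> h s = t -> ginv h t = s.
Proof.
  intros Hm Hs Ht. unfold ginv.
  destruct (epsilon_spec (inhabits 0) (fun s => I11 s /\ h s = t) (ex_intro _ s (conj Hs Ht))) as [H1 H2].
  set (e := epsilon _ _) in *.
  destruct (Rtotal_order e s) as [Hl|[Heq|Hl]]; auto.
  - assert (h e < h s) by (apply Hm; auto). lra.
  - assert (h s < h e) by (apply Hm; auto). lra.
Qed.

Lemma ginv_spec h t : inG h -> I11 t -> I11 (ginv h t) /\ h (ginv h t) = t.
Proof.
  intros HG Ht. destruct HG as (Mh & Ch & Sh & E1 & E2).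
  assert (C := gcont_continuity _ (relcont_gcont _ Ch)).
  destruct (IVT_gen _ (-1) 1 t C) as [x [Hx Hfx]].
  { rewrite !clamp_id; unfold I11; try lra. rewrite E1 E2.
    unfold Rmin, Rmax; destruct Rle_dec; unfold I11 in Ht; lra. }
  assert (Ix : I11 x) by (revert Hx; unfold Rmin, Rmax, I11; destruct Rle_dec; lra).
  rewrite clamp_id in Hfx; auto.
  rewrite (ginv_unique h x t); auto.
Qed.

Lemma ginv_left h s : inG h -> I11 s -> ginv h (h s) = s.
Proof. intros HG Hs. apply (ginv_unique h s (h s) (proj1 (proj2 (proj2 HG))) Hs erefl). Qed.

Lemma ginv_maps h : inG h -> maps (ginv h).
Proof. intros HG t Ht. apply (ginv_spec h t HG Ht). Qed.

Lemma ginv_smono h : inG h -> smono (ginv h).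
Proof.
  intros HG y y' Hy Hy' Hlt.
  destruct (ginv_spec h y HG Hy) as [I1 E1].
  destruct (ginv_spec h y' HG Hy') as [I2 E2].
  destruct (Rlt_le_dec (ginv h y) (ginv h y')) as [?|Hle]; auto.
  assert (h (ginv h y') <= h (ginv h y)) by (apply smono_le; auto; apply inG_smono, HG).
  lra.
Qed.

Lemma ginv_relcont h : inG h -> relcont (ginv h).
Proof.
  intros HG t Ht eps He.
  destruct (ginv_spec h t HG Ht) as [I0 E0].
  set (s0 := ginv h t) in *.
  assert (Mh := proj1 HG). assert (Sh := proj1 (proj2 (proj2 HG))).
  assert (Gm := ginv_smono h HG).
  assert (U : exists d1, 0 < d1 /\ forall s, I11 s -> s < t + d1 -> ginv h s < s0 + eps).
  { destruct (Rle_lt_dec 1 (s0 + eps/2)) as [Hb|Hb].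
    - exists 1; split; [lra|]. intros s Hs _. destruct (ginv_spec h s HG Hs) as [[_ ?] _]. lra.
    - set (b := s0 + eps/2).
      assert (Ib : I11 b) by (unfold b, I11 in *; lra).
      assert (hb : t < h b) by (rewrite <- E0; apply Sh; auto; unfold b; lra).
      exists (h b - t); split; [lra|]. intros s Hs Hlt.
      assert (ginv h s < ginv h (h b)) by (apply Gm; auto; lra).
      rewrite ginv_left in H; auto. unfold b in H; lra. }
  assert (L : exists d2, 0 < d2 /\ forall s, I11 s -> t - d2 < s -> s0 - eps < ginv h s).
  { destruct (Rle_lt_dec (s0 - eps/2) (-1)) as [Hb|Hb].
    - exists 1; split; [lra|]. intros s Hs _. destruct (ginv_spec h s HG Hs) as [[? _] _]. lra.
    - set (b := s0 - eps/2).
      assert (Ib : I11 b) by (unfold b, I11 in *; lra).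
      assert (hb : h b < t) by (rewrite <- E0; apply Sh; auto; unfold b; lra).
      exists (t - h b); split; [lra|]. intros s Hs Hlt.
      assert (ginv h (h b) < ginv h s) by (apply Gm; auto; lra).
      rewrite ginv_left in H; auto. unfold b in H; lra. }
  destruct U as [d1 [Hd1 U]]. destruct L as [d2 [Hd2 L]].
  exists (Rmin d1 d2); split; [apply Rmin_pos; auto|].
  intros s Hs Hd. 
  assert (A1 := Rmin_l d1 d2). assert (A2 := Rmin_r d1 d2).
  apply Rabs_def2 in Hd. destruct Hd.
  apply Rabs_def1.
  - assert (ginv h s < s0 + eps) by (apply U; auto; lra). lra.
  - assert (s0 - eps < ginv h s) by (apply L; auto; lra). lra.
Qed.
Lemma RInt_chasles_R f a b c : ex_RInt f a b -> ex_RInt f b c -> RInt f a c = RInt f a b + RInt f b c.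
Proof. intros H1 H2. rewrite <- (RInt_Chasles f a b c H1 H2). reflexivity. Qed.

Lemma RInt_lower f a b m : a <= b -> ex_RInt f a b -> (forall x, a < x < b -> m <= f x) -> m * (b - a) <= RInt f a b.
Proof.
  intros Hab Hf Hm. 
  replace (m * (b - a)) with (RInt (fun _ => m) a b).
  apply RInt_le; auto. apply ex_RInt_const.
  rewrite RInt_const. unfold scal; simpl; unfold mult; simpl. ring.
Qed.

Lemma RInt_upper f a b m : a <= b -> ex_RInt f a b -> (forall x, a < x < b -> f x <= m) -> RInt f a b <= m * (b - a).
Proof.
  intros Hab Hf Hm. 
  replace (m * (b - a)) with (RInt (fun _ => m) a b).
  apply RInt_le; auto. apply ex_RInt_const.
  rewrite RInt_const. unfold scal; simpl; unfold mult; simpl. ring.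
Qed.

Section Young.
Variable phi : R -> R.
Hypothesis HG : inG phi.
Let psi := ginv phi.
Let D x := RInt phi (-1) x + RInt psi (-1) (phi x) - (x * phi x - 1).

Lemma young_piece x x' : I11 x -> I11 x' -> x <= x' ->
  Rabs (D x' - D x) <= (x' - x) * (phi x' - phi x).
Proof.
  intros Hx Hx' Hle.
  assert (Mp := inG_maps _ HG). assert (Sp := inG_smono _ HG).
  assert (Cp := inG_relcont _ HG).
  assert (Cq := ginv_relcont _ HG). assert (Sq := ginv_smono _ HG).
  assert (I1 : I11 (-1)) by (unfold I11; lra).
  assert (P1 : phi x <= phi x') by (apply smono_le; auto).
  assert (C1 : RInt phi (-1) x' = RInt phi (-1) x + RInt phi x x')
    by (apply RInt_chasles_R; apply relcont_ex_RInt; auto).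
  assert (C2 : RInt psi (-1) (phi x') = RInt psi (-1) (phi x) + RInt psi (phi x) (phi x'))
    by (apply RInt_chasles_R; apply relcont_ex_RInt; auto).
  assert (A1 : phi x * (x' - x) <= RInt phi x x').
  { apply RInt_lower; auto. apply relcont_ex_RInt; auto.
    intros y Hy. assert (I11 y) by (unfold I11 in *; lra). apply smono_le; auto; lra. }
  assert (A2 : RInt phi x x' <= phi x' * (x' - x)).
  { apply RInt_upper; auto. apply relcont_ex_RInt; auto.
    intros y Hy. assert (I11 y) by (unfold I11 in *; lra). apply smono_le; auto; lra. }
  assert (B1 : x * (phi x' - phi x) <= RInt psi (phi x) (phi x')).
  { apply RInt_lower; auto. apply relcont_ex_RInt; auto.
    intros y Hy. assert (I11 y) by (assert (H1 := Mp x Hx); assert (H2 := Mp x' Hx'); unfold I11 in *; lra).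
    rewrite <- (ginv_left phi x HG Hx) at 1. apply smono_le; auto; lra. }
  assert (B2 : RInt psi (phi x) (phi x') <= x' * (phi x' - phi x)).
  { apply RInt_upper; auto. apply relcont_ex_RInt; auto.
    intros y Hy. assert (I11 y) by (assert (H1 := Mp x Hx); assert (H2 := Mp x' Hx'); unfold I11 in *; lra).
    rewrite <- (ginv_left phi x' HG Hx'). apply smono_le; auto; lra. }
  unfold D. rewrite C1 C2. apply Rabs_le; split; lra.
Qed.

Lemma young_induct N : (0 < N)%coq_nat -> forall k, (k <= N)%coq_nat ->
  Rabs (D (-1 + INR k * (2 / INR N))) <= (2 / INR N) * (phi (-1 + INR k * (2 / INR N)) + 1).
Proof.
  intros HN. assert (PN : 0 < INR N) by (apply lt_0_INR; auto).
  set (h := 2 / INR N). assert (Hh : 0 < h) by (unfold h; apply Rdiv_lt_0_compat; lra).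
  assert (Ik : forall k, (k <= N)%coq_nat -> I11 (-1 + INR k * h)).
  { intros k Hk. assert (Hk' := le_INR _ _ Hk). assert (0 <= INR k) by apply pos_INR.
    assert (INR k * h * INR N = 2 * INR k) by (unfold h; field; lra).
    unfold I11; split; nra. }
  induction k as [|k IH]; intros Hk.
  - simpl. replace (-1 + 0 * h) with (-1) by ring. unfold D.
    rewrite (inG_m1 _ HG) !RInt_point. match goal with |- Rabs ?e <= _ => replace e with 0 by (rewrite /zero /=; ring) end. rewrite Rabs_R0. lra.
  - assert (Hk0 : (k <= N)%coq_nat) by lia.
    assert (IH' := IH Hk0).
    rewrite S_INR. replace (-1 + (INR k + 1) * h) with ((-1 + INR k * h) + h) by ring.
    assert (P := young_piece (-1 + INR k * h) (-1 + INR k * h + h) (Ik k Hk0)).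
    replace (-1 + INR k * h + h) with (-1 + INR (S k) * h) in P by (rewrite S_INR; ring).
    replace (-1 + INR k * h + h) with (-1 + INR (S k) * h) by (rewrite S_INR; ring).
    assert (P' := P (Ik _ Hk) ltac:(rewrite S_INR; lra)).
    replace (-1 + INR (S k) * h - (-1 + INR k * h)) with h in P' by (rewrite S_INR; ring).
    assert (T := Rabs_triang (D (-1 + INR k * h)) (D (-1 + INR (S k) * h) - D (-1 + INR k * h))).
    replace (D (-1 + INR k * h) + (D (-1 + INR (S k) * h) - D (-1 + INR k * h))) with (D (-1 + INR (S k) * h)) in T by ring.
    lra.
Qed.

Lemma young : RInt phi (-1) 1 + RInt psi (-1) 1 = 0.
Proof.
  assert (Hb : forall N, (0 < N)%coq_nat -> Rabs (D 1) <= 4 / INR N).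
  { intros N HN. assert (PN : 0 < INR N) by (apply lt_0_INR; auto).
    assert (Y := young_induct N HN N (Nat.le_refl N)).
    replace (-1 + INR N * (2 / INR N)) with 1 in Y by (field; lra).
    rewrite (inG_p1 _ HG) in Y. replace (4 / INR N) with (2 / INR N * (1 + 1)) by (field; lra).
    exact Y. }
  assert (E : D 1 = RInt phi (-1) 1 + RInt psi (-1) 1).
  { unfold D. rewrite (inG_p1 _ HG). ring. }
  rewrite <- E.
  destruct (Req_dec (D 1) 0) as [?|Hne]; auto.
  assert (Ha : 0 < Rabs (D 1)) by (apply Rabs_pos_lt; auto).
  destruct (archimed_cor1 (Rabs (D 1) / 4)) as [N [HN1 HN2]]; [lra|].
  assert (B := Hb N HN2). assert (PN : 0 < INR N) by (apply lt_0_INR; auto).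
  assert (4 / INR N < Rabs (D 1)).
  { replace (4 / INR N) with (4 * / INR N) by (unfold Rdiv; ring). lra. }
  lra.
Qed.
End Young.
Lemma inG_intro f : maps f -> relcont f -> smono f -> f (-1) = -1 -> f 1 = 1 -> inG f.
Proof. intros H1 H2 H3 H4 H5. exact (conj H1 (conj H2 (conj H3 (conj H4 H5)))). Qed.

Lemma inG_comp f g : inG f -> inG g -> inG (fun t => f (g t)).
Proof.
  intros Hf Hg. apply inG_intro.
  - intros t Ht. apply (inG_maps _ Hf), (inG_maps _ Hg), Ht.
  - apply relcont_comp; [apply inG_relcont; auto | apply inG_relcont; auto | apply inG_maps; auto].
  - intros s t Hs Ht Hst. apply (inG_smono _ Hf); try apply (inG_maps _ Hg); auto. apply (inG_smono _ Hg); auto.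
  - rewrite (inG_m1 _ Hg). apply inG_m1; auto.
  - rewrite (inG_p1 _ Hg). apply inG_p1; auto.
Qed.

Lemma inG_ginv h : inG h -> inG (ginv h).
Proof.
  intros HG. apply inG_intro.
  - apply ginv_maps; auto.
  - apply ginv_relcont; auto.
  - apply ginv_smono; auto.
  - apply ginv_unique. apply inG_smono; auto. unfold I11; lra. apply inG_m1; auto.
  - apply ginv_unique. apply inG_smono; auto. unfold I11; lra. apply inG_p1; auto.
Qed.

Lemma I11_opp t : I11 t -> I11 (- t).
Proof. unfold I11; lra. Qed.

Lemma inG_fstar f : inG f -> inG (fstar f).
Proof.
  intros Hf. unfold fstar. apply inG_intro.
  - intros t Ht. apply I11_opp, (inG_maps _ Hf), I11_opp, Ht.
  - intros t Ht eps He. destruct (inG_relcont _ Hf (-t) (I11_opp _ Ht) eps He) as [d [Hd H]].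
    exists d; split; auto. intros s Hs Hst.
    replace (- f (- s) - - f (- t)) with (- (f (-s) - f (-t))) by ring. rewrite Rabs_Ropp.
    apply H. apply I11_opp; auto. replace (-s - -t) with (-(s-t)) by ring. rewrite Rabs_Ropp; auto.
  - intros s t Hs Ht Hst. assert (f (-t) < f (-s)). apply (inG_smono _ Hf); try apply I11_opp; auto; lra. lra.
  - replace (- -1) with 1 by ring. rewrite (inG_p1 _ Hf). ring.
  - rewrite (inG_m1 _ Hf). ring.
Qed.

Lemma inG_ex_RInt f : inG f -> ex_RInt f (-1) 1.
Proof. intros H. apply relcont_ex_RInt. apply inG_relcont; auto. unfold I11; lra. unfold I11; lra. Qed.

Lemma Qanti f g : inG f -> inG g -> Q f g = - Q g f.
Proof.
  intros Hf Hg.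
  set (phi := fun t => f (ginv g t)).
  assert (Hp : inG phi) by exact (inG_comp f (ginv g) Hf (inG_ginv g Hg)).
  assert (Y := young phi Hp).
  assert (E : Q g f = RInt (ginv phi) (-1) 1).
  { unfold Q. apply RInt_ext. intros x Hx.
    assert (Ix : I11 x) by (revert Hx; unfold Rmin, Rmax, I11; destruct Rle_dec; lra).
    symmetry. apply ginv_unique. apply inG_smono; auto.
    apply (inG_maps _ Hg), (ginv_maps _ Hf), Ix.
    unfold phi. rewrite ginv_left; auto. apply ginv_spec; auto. apply ginv_maps; auto. }
  rewrite E. unfold Q. fold phi. lra.
Qed.

Lemma RInt_opp_comp phi : ex_RInt phi (-1) 1 -> RInt (fun t => - phi (- t)) (-1) 1 = - RInt phi (-1) 1.
Proof.
  intros H. apply is_RInt_unique.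
  apply (@RInt_correct R_CompleteNormedModule) in H.
  apply (@is_RInt_swap R_NormedModule) in H.
  replace 1 with (- -1) in H at 1 by ring.
  replace (-1) with (- (1)) in H at 2 by ring.
  apply (is_RInt_comp_opp _ (-1) 1) in H. exact H.
Qed.
Lemma open_I11 x : Rmin (-1) 1 < x < Rmax (-1) 1 -> I11 x.
Proof. unfold Rmin, Rmax, I11; destruct Rle_dec; lra. Qed.

Lemma odd_int0 phi : ex_RInt phi (-1) 1 -> (forall t, I11 t -> phi (- t) = - phi t) -> RInt phi (-1) 1 = 0.
Proof.
  intros H O.
  assert (E : RInt phi (-1) 1 = RInt (fun t => - phi (- t)) (-1) 1).
  { apply RInt_ext. intros x Hx. rewrite O; [|apply open_I11; auto]. symmetry; apply Ropp_involutive. }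
  rewrite RInt_opp_comp in E; auto. lra.
Qed.

Lemma Q_star f g : inG f -> inG g -> Q (fstar f) (fstar g) = - Q f g.
Proof.
  intros Hf Hg. unfold Q.
  rewrite <- RInt_opp_comp.
  2:{ apply inG_ex_RInt. exact (inG_comp f (ginv g) Hf (inG_ginv g Hg)). }
  apply RInt_ext. intros x Hx. apply open_I11 in Hx.
  rewrite (ginv_unique (fstar g) (- ginv g (- x)) x).
  - unfold fstar. rewrite Ropp_involutive. reflexivity.
  - apply inG_smono, inG_fstar; auto.
  - apply I11_opp, ginv_maps, I11_opp; auto.
  - unfold fstar. rewrite Ropp_involutive. rewrite (proj2 (ginv_spec g (-x) Hg (I11_opp _ Hx))). ring.
Qed.

Lemma RInt_fstar f : inG f -> RInt (fstar f) (-1) 1 = - RInt f (-1) 1.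
Proof. intros Hf. unfold fstar. apply RInt_opp_comp, inG_ex_RInt; auto. Qed.

Lemma Q_rho f g h : inG f -> inG g -> inG h -> Q (fun t => f (h t)) (fun t => g (h t)) = Q f g.
Proof.
  intros Hf Hg Hh. unfold Q. apply RInt_ext. intros x Hx. apply open_I11 in Hx.
  rewrite (ginv_unique (fun t => g (h t)) (ginv h (ginv g x)) x); auto.
  - rewrite (proj2 (ginv_spec h _ Hh (ginv_maps _ Hg _ Hx))). auto.
  - apply inG_smono. exact (inG_comp g h Hg Hh).
  - apply ginv_maps, ginv_maps; auto.
  - rewrite (proj2 (ginv_spec h _ Hh (ginv_maps _ Hg _ Hx))). apply ginv_spec; auto.
Qed.
Lemma odot_left a b s : s <= 0 -> odot a b s = (a (2*s+1) - 1)/2.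
Proof. intros H. unfold odot. destruct Rle_dec; [reflexivity|lra]. Qed.

Lemma odot_right a b s : inG a -> inG b -> 0 <= s -> odot a b s = (b (2*s-1) + 1)/2.
Proof.
  intros Ha Hb H. unfold odot. destruct Rle_dec; [|reflexivity].
  assert (s = 0) by lra. subst. replace (2*0+1) with 1 by ring. replace (2*0-1) with (-1) by ring.
  rewrite (inG_p1 _ Ha) (inG_m1 _ Hb). simpl. field.
Qed.

Lemma is_RInt_R_eq (f : R -> R) (a b l l' : R) : @is_RInt R_NormedModule f a b l -> l = l' -> @is_RInt R_NormedModule f a b l'.
Proof. intros H ->; exact H. Qed.

Lemma is_RInt_odot a b A B : is_RInt a (-1) 1 A -> is_RInt b (-1) 1 B ->
  is_RInt (odot a b) (-1) 1 ((A + B)/4).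
Proof.
  intros Ha Hb.
  assert (L : is_RInt (odot a b) (-1) 0 (A/4 - 1/2)).
  { replace (-1) with (2*(-1)+1) in Ha at 1 by ring.
    replace 1 with (2*0+1) in Ha at 2 by ring.
    apply (is_RInt_comp_lin a 2 1 (-1) 0) in Ha.
    apply (is_RInt_scal _ _ _ (/4)) in Ha.
    assert (C := @is_RInt_const R_NormedModule (-1) 0 (1/2)).
    assert (M := is_RInt_minus _ _ _ _ _ _ Ha C).
    eapply is_RInt_ext; [|eapply is_RInt_R_eq; [exact M|]].
    - intros x Hx. rewrite odot_left. 2:{ revert Hx; unfold Rmin, Rmax; destruct Rle_dec; lra. }
      rewrite /minus /plus /opp /scal /=. rewrite /mult /=. field.
    - rewrite /minus /plus /opp /scal /=. rewrite /mult /=. field. }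
  assert (Rr : is_RInt (odot a b) 0 1 (B/4 + 1/2)).
  { replace (-1) with (2*0+(-1)) in Hb at 1 by ring.
    replace 1 with (2*1+(-1)) in Hb at 1 by ring.
    apply (is_RInt_comp_lin b 2 (-1) 0 1) in Hb.
    apply (is_RInt_scal _ _ _ (/4)) in Hb.
    assert (C := @is_RInt_const R_NormedModule 0 1 (1/2)).
    assert (M := is_RInt_plus _ _ _ _ _ _ Hb C).
    eapply is_RInt_ext; [|eapply is_RInt_R_eq; [exact M|]].
    - intros x Hx. unfold odot. destruct Rle_dec.
      + exfalso; revert Hx r; unfold Rmin, Rmax; destruct (Rle_dec 0 1); lra.
      + rewrite /minus /plus /opp /scal /=. rewrite /mult /=. replace (2*x + -1) with (2*x-1) by ring. field.
    - rewrite /minus /plus /opp /scal /=. rewrite /mult /=. field. }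
  eapply is_RInt_R_eq. apply (is_RInt_Chasles _ _ _ _ _ _ L Rr).
  rewrite /plus /=. field.
Qed.
Lemma clamp_low t : t <= -1 -> clamp t = -1.
Proof. unfold clamp, Rmax, Rmin; repeat destruct Rle_dec; lra. Qed.
Lemma clamp_high t : 1 <= t -> clamp t = 1.
Proof. unfold clamp, Rmax, Rmin; repeat destruct Rle_dec; lra. Qed.

Lemma inG_odot a b : inG a -> inG b -> inG (odot a b).
Proof.
  intros Ha Hb.
  assert (Ma := inG_maps _ Ha). assert (Mb := inG_maps _ Hb).
  assert (Sa := inG_smono _ Ha). assert (Sb := inG_smono _ Hb).
  apply inG_intro.
  - intros s Hs. destruct (Rle_dec s 0) as [H|H].
    + rewrite odot_left; auto. assert (I11 (2*s+1)) by (unfold I11 in *; lra).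
      assert (Y := Ma _ H0). unfold I11 in *; lra.
    + rewrite odot_right; auto; [|lra]. assert (I11 (2*s-1)) by (unfold I11 in *; lra).
      assert (Y := Mb _ H0). unfold I11 in *; lra.
  - apply (relcont_ext (fun s => (a (clamp (2*s+1)) + -1)/2 + (b (clamp (2*s + -1)) + 1)/2)).
    + intros s Hs. destruct (Rle_dec s 0) as [H|H].
      * rewrite odot_left; auto. rewrite clamp_id; [|unfold I11 in *; lra].
        rewrite clamp_low; [|lra]. rewrite (inG_m1 _ Hb). field.
      * rewrite odot_right; auto; [|lra]. rewrite clamp_high; [|lra].
        rewrite clamp_id; [|unfold I11 in *; lra]. rewrite (inG_p1 _ Ha).
        replace (2*s + -1) with (2*s-1) by ring. field.
    + apply gcont_relcont, gcont_plus.
      * apply (gcont_aff (fun t => a (clamp t))). apply relcont_gcont, inG_relcont; auto.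
      * apply (gcont_aff (fun t => b (clamp t))). apply relcont_gcont, inG_relcont; auto.
  - intros s t Hs Ht Hst. destruct (Rle_dec t 0) as [H|H].
    + rewrite !odot_left; try lra. assert (a (2*s+1) < a (2*t+1)); [|lra].
      apply Sa; unfold I11 in *; lra.
    + rewrite (odot_right a b t); auto; [|lra]. destruct (Rle_dec s 0) as [H'|H'].
      * rewrite odot_left; auto. 
        assert (a (2*s+1) <= 1) by (apply (Ma (2*s+1)); unfold I11 in *; lra).
        assert (b (-1) < b (2*t-1)) by (apply Sb; unfold I11 in *; lra).
        rewrite (inG_m1 _ Hb) in H1. lra.
      * rewrite odot_right; auto; [|lra]. assert (b (2*s-1) < b (2*t-1)); [|lra].
        apply Sb; unfold I11 in *; lra.
  - rewrite odot_left; [|lra]. replace (2 * -1 + 1) with (-1) by ring. rewrite (inG_m1 _ Ha). field.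
  - rewrite odot_right; auto; [|lra]. replace (2 * 1 - 1) with 1 by ring. rewrite (inG_p1 _ Hb). field.
Qed.

Lemma Q_odot a1 b1 a2 b2 : inG a1 -> inG b1 -> inG a2 -> inG b2 ->
  Q (odot a1 b1) (odot a2 b2) = (Q a1 a2 + Q b1 b2)/4.
Proof.
  intros H1 H2 H3 H4. unfold Q. apply is_RInt_unique.
  assert (S := inG_smono _ (inG_odot _ _ H3 H4)).
  apply (is_RInt_ext (odot (fun t => a1 (ginv a2 t)) (fun t => b1 (ginv b2 t)))).
  - intros x Hx. assert (Ix := open_I11 _ Hx).
    assert (Hx' : -1 < x < 1) by (revert Hx; unfold Rmin, Rmax; destruct Rle_dec; lra).
    destruct (Rle_dec x 0) as [H|H].
    + assert (J : I11 (2*x+1)) by (unfold I11; lra).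
      destruct (ginv_spec a2 _ H3 J) as [G1 G2].
      rewrite (ginv_unique (odot a2 b2) ((ginv a2 (2*x+1) - 1)/2) x S).
      * rewrite !odot_left; auto. replace (2 * ((ginv a2 (2 * x + 1) - 1) / 2) + 1) with (ginv a2 (2*x+1)) by field. auto.
        unfold I11 in G1; lra.
      * unfold I11 in *; split; lra.
      * rewrite odot_left; [|unfold I11 in G1; lra].
        replace (2 * ((ginv a2 (2 * x + 1) - 1) / 2) + 1) with (ginv a2 (2*x+1)) by field. rewrite G2. field.
    + assert (J : I11 (2*x-1)) by (unfold I11; lra).
      destruct (ginv_spec b2 _ H4 J) as [G1 G2].
      rewrite (ginv_unique (odot a2 b2) ((ginv b2 (2*x-1) + 1)/2) x S).
      * rewrite (odot_right a1 b1 _ H1 H2); [| unfold I11 in G1; lra].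
        rewrite (odot_right _ _ x (inG_comp _ _ H1 (inG_ginv _ H3)) (inG_comp _ _ H2 (inG_ginv _ H4))); [|lra].
        replace (2 * ((ginv b2 (2 * x - 1) + 1) / 2) - 1) with (ginv b2 (2*x-1)) by field. reflexivity.
      * unfold I11 in *; split; lra.
      * rewrite odot_right; auto; [|unfold I11 in G1; lra].
        replace (2 * ((ginv b2 (2 * x - 1) + 1) / 2) - 1) with (ginv b2 (2*x-1)) by field. rewrite G2. field.
  - apply is_RInt_odot; apply (@RInt_correct R_CompleteNormedModule); apply inG_ex_RInt.
    exact (inG_comp _ _ H1 (inG_ginv _ H3)).
    exact (inG_comp _ _ H2 (inG_ginv _ H4)).
Qed.
Lemma Rplus_assoc' : associative Rplus. Proof. intros x y z; rewrite Rplus_assoc; reflexivity. Qed.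
HB.instance Definition _ := Monoid.isComLaw.Build R 0 Rplus Rplus_assoc' Rplus_comm Rplus_0_l.

Lemma sumR_plus (I : Type) (r : seq I) (P : pred I) (F G : I -> R) :
  \big[Rplus/0]_(k <- r | P k) (F k + G k) = \big[Rplus/0]_(k <- r | P k) F k + \big[Rplus/0]_(k <- r | P k) G k.
Proof. elim: r => [|x r IH]; rewrite ?big_nil ?big_cons; [ring|]. case: (P x); rewrite IH; ring. Qed.

Lemma sumR_scal (I : Type) (r : seq I) (P : pred I) (c : R) (F : I -> R) :
  \big[Rplus/0]_(k <- r | P k) (c * F k) = c * \big[Rplus/0]_(k <- r | P k) F k.
Proof. elim: r => [|x r IH]; rewrite ?big_nil ?big_cons; [ring|]. case: (P x); rewrite IH; ring. Qed.

Section Parts.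
Variable n : nat.
Variable f : vec n.
Hypothesis Hf : inG0n f.

Let HfG i : inG (f i) := proj1 (Hf i).

Lemma part_a : inG0n (vstar f) /\ dig_eq (Rdig (vstar f)) (rev_dig (Rdig f)) /\
   (generic f -> generic (vstar f)) /\
   (strongly_generic f -> strongly_generic (vstar f)).
Proof.
  split; [|split; [|split]].
  - intros i. split. apply inG_fstar, HfG. unfold vstar. rewrite RInt_fstar; [|apply HfG].
    rewrite (proj2 (Hf i)). exact Ropp_0.
  - intros i j. unfold Rdig, rev_dig, vstar. rewrite Q_star; try apply HfG.
    rewrite (Qanti (f j) (f i)); try apply HfG. rewrite Ropp_involutive. tauto.
  - intros [G1 G2]. split.
    + intros c0 c Hc.
      assert (K := G1 (- c0) (fun k => - c k)).
      destruct K as [K1 K2].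
      { intros t Ht. assert (E := Hc (- t) (I11_opp _ Ht)).
        assert (Sg : \big[Rplus/0]_(k < n) ((fun k => - c k) k * f k t) = \big[Rplus/0]_(k < n) (c k * vstar f k (- t))).
        { apply eq_bigr; intros k _; unfold vstar, fstar; rewrite Ropp_involutive; ring. }
        rewrite Sg. lra. }
      split. lra. intros k. assert (K := K2 k). simpl in K. lra.
    + intros i j Hij. unfold vstar. rewrite Q_star; try apply HfG. 
      assert (X := G2 i j Hij). intro E; apply X; lra.
  - intros [G1 G2]. split.
    + intros c Hc k.
      assert (K := G1 (fun k => - c k)). 
      assert (K' : - c k = 0); [|lra]. refine (K _ k).
      intros t Ht. etransitivity; [|exact (Hc t Ht)]. apply eq_bigr. intros m _.
      unfold vstar, feven, fstar. rewrite Ropp_involutive. field.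
    + intros i j Hij. unfold vstar. rewrite Q_star; try apply HfG. 
      assert (X := G2 i j Hij). intro E; apply X; lra.
Qed.
End Parts.
Section Parts2.
Variable n : nat.
Variable f : vec n.
Hypothesis Hf : inG0n f.
Let HfG i : inG (f i) := proj1 (Hf i).

Lemma part_odot (g : vec n) (lam : R) :
  (forall i, inG (g i)) -> (forall i, RInt (g i) (-1) 1 = 0) -> 0 <= lam ->
  (forall i j, Q (g i) (g j) = lam * Q (f i) (f j)) ->
  (forall k u, I11 u -> g k u + g k (- u) = lam * (f k u + f k (- u))) ->
  inG0n (vodot g f) /\ dig_eq (Rdig (vodot g f)) (Rdig f) /\
   (generic f -> generic (vodot g f)) /\
   (strongly_generic f -> strongly_generic (vodot g f)).
Proof.
  intros Hg Ig Hl HQ He.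
  assert (Qo : forall i j, Q (vodot g f i) (vodot g f j) = (1 + lam) / 4 * Q (f i) (f j)).
  { intros i j. unfold vodot. rewrite Q_odot; try apply Hg; try apply HfG. rewrite HQ. field. }
  assert (QN : forall i j, Q (f i) (f j) <> 0 -> Q (vodot g f i) (vodot g f j) <> 0).
  { intros i j H. rewrite Qo. apply Rmult_integral_contrapositive; split; auto. lra. }
  split; [|split; [|split]].
  - intros i. split. apply inG_odot; auto. 
    unfold vodot. apply is_RInt_unique. eapply is_RInt_R_eq. apply is_RInt_odot.
    apply (@RInt_correct R_CompleteNormedModule), inG_ex_RInt; auto.
    apply (@RInt_correct R_CompleteNormedModule), inG_ex_RInt; auto.
    rewrite Ig (proj2 (Hf i)). field.
  - intros i j. unfold Rdig. rewrite Qo. split; intros H.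
    + destruct (Rle_lt_dec (Q (f j) (f i)) 0); auto. 
      assert (0 < (1 + lam) / 4) by lra.
      assert ((1 + lam) / 4 * Q (f j) (f i) <= 0) by nra. lra.
    + apply Rmult_lt_0_compat; lra.
  - intros [G1 G2]. split.
    + intros c0 c Hc.
      set (S := \big[Rplus/0]_(k < n) c k).
      assert (Hu : forall u, I11 u -> c0 * ((u+1)/2) + (/2 * \big[Rplus/0]_(k < n) (c k * f k u) + /2 * S) = 0).
      { intros u Iu. etransitivity; [|exact (Hc ((u+1)/2) ltac:(unfold I11 in *; lra))]. f_equal.
        unfold S. rewrite -!sumR_scal -sumR_plus. apply eq_bigr. intros k _.
        unfold vodot. rewrite odot_right; [|apply Hg|apply HfG|unfold I11 in *; lra].
        replace (2 * ((u + 1) / 2) - 1) with u by field. field. }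
      assert (H1 := Hu 1 ltac:(unfold I11; lra)).
      assert (E1 : \big[Rplus/0]_(k < n) (c k * f k 1) = S).
      { apply eq_bigr. intros k _. rewrite (inG_p1 _ (HfG k)). ring. }
      rewrite E1 in H1.
      destruct (G1 (c0/2) (fun k => c k / 2)) as [K1 K2].
      { intros t Ht. assert (H2 := Hu t Ht).
        assert (E2 : \big[Rplus/0]_(k < n) ((fun k => c k / 2) k * f k t) = /2 * \big[Rplus/0]_(k < n) (c k * f k t)).
        { rewrite -sumR_scal. apply eq_bigr. intros k _. simpl. field. }
        rewrite E2. lra. }
      split. lra. intros k. assert (K := K2 k). simpl in K. lra.
    + intros i j Hij. apply QN, G2, Hij.
  - intros [G1 G2]. split.
    + intros c Hc k.
      assert (Hu : forall u, I11 u -> \big[Rplus/0]_(k < n) (c k * ((f k u + g k (- u)) / 4)) = 0).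
      { intros u Iu. etransitivity; [|exact (Hc ((u+1)/2) ltac:(unfold I11 in *; lra))].
        apply eq_bigr. intros m _. unfold vodot, feven.
        rewrite odot_right; [|apply Hg|apply HfG|unfold I11 in *; lra].
        rewrite odot_left; [|unfold I11 in *; lra].
        replace (2 * ((u + 1) / 2) - 1) with u by field.
        replace (2 * - ((u + 1) / 2) + 1) with (- u) by field. field. }
      assert (K := G1 (fun k => (1 + lam) / 2 * c k)).
      assert (K' : (1 + lam) / 2 * c k = 0).
      { refine (K _ k). intros u Iu.
        assert (A1 := Hu u Iu). assert (A2 := Hu (- u) (I11_opp _ Iu)).
        transitivity (\big[Rplus/0]_(k < n) (c k * ((f k u + g k (- u)) / 4)) + \big[Rplus/0]_(k < n) (c k * ((f k (- u) + g k (- - u)) / 4))); [|rewrite A1 A2; ring].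
        rewrite -sumR_plus. apply eq_bigr. intros m _.
        unfold feven. rewrite Ropp_involutive.
        assert (Em := He m u Iu).
        replace (g m u) with (lam * (f m u + f m (- u)) - g m (- u)) by lra. field. }
      apply Rmult_integral in K'. destruct K' as [K'|K']; auto. lra.
    + intros i j Hij. apply QN, G2, Hij.
Qed.
End Parts2.
Lemma Q_odd g1 g2 : inG00 g1 -> inG00 g2 -> Q g1 g2 = 0.
Proof.
  intros [G1 O1] [G2 O2]. unfold Q. apply odd_int0.
  apply inG_ex_RInt. exact (inG_comp _ _ G1 (inG_ginv _ G2)).
  intros t Ht.
  rewrite (ginv_unique g2 (- ginv g2 t) (- t)).
  - apply O1. apply ginv_maps; auto.
  - apply inG_smono; auto.
  - apply I11_opp, ginv_maps; auto.
  - rewrite O2. rewrite (proj2 (ginv_spec g2 t G2 Ht)). auto. apply ginv_maps; auto.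
Qed.

Theorem proposition4p16 (n : nat) (f : vec n) :
  inG0n f ->
  (* (a) *)
  (inG0n (vstar f) /\ dig_eq (Rdig (vstar f)) (rev_dig (Rdig f)) /\
   (generic f -> generic (vstar f)) /\
   (strongly_generic f -> strongly_generic (vstar f))) /\
  (* (b) *)
  (inG0n (vodot f f) /\ dig_eq (Rdig (vodot f f)) (Rdig f) /\
   (generic f -> generic (vodot f f)) /\
   (strongly_generic f -> strongly_generic (vodot f f))) /\
  (* (c) *)
  (forall g : vec n, inG00n g ->
   inG0n (vodot g f) /\ dig_eq (Rdig (vodot g f)) (Rdig f) /\
   (generic f -> generic (vodot g f)) /\
   (strongly_generic f -> strongly_generic (vodot g f))) /\
  (* (d) *)
  (forall h : R -> R, inG h ->
   inGn (rho h f) /\ dig_eq (Rdig (rho h f)) (Rdig f)) /\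
  (* (e) *)
  (forall pi : 'S_n,
   inG0n (pvec pi f) /\ dig_eq (Rdig (pvec pi f)) (perm_dig pi (Rdig f)) /\
   (generic f -> generic (pvec pi f)) /\
   (strongly_generic f -> strongly_generic (pvec pi f))).
Proof.
  intros Hf.
  assert (HfG : forall i, inG (f i)) by (intros i; apply (proj1 (Hf i))).
  split; [|split; [|split; [|split]]].
  - apply part_a; auto.
  - apply (part_odot n f Hf f 1); auto.
    + intros i; apply (proj2 (Hf i)).
    + lra.
    + intros i j; ring.
    + intros k u _; ring.
  - intros g Hg. apply (part_odot n f Hf g 0).
    + intros i; apply (proj1 (Hg i)).
    + intros i. apply odd_int0. apply inG_ex_RInt, (proj1 (Hg i)). apply (proj2 (Hg i)).
    + lra.
    + intros i j. rewrite Q_odd; auto. ring.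
    + intros k u Hu. rewrite (proj2 (Hg k)); auto. ring.
  - intros h Hh. split.
    + intros i. unfold rho. apply inG_comp; auto.
    + intros i j. unfold Rdig, rho. rewrite Q_rho; auto. tauto.
  - intros pi. split; [|split; [|split]].
    + intros i. apply Hf.
    + intros a b. unfold Rdig, pvec, perm_dig. split.
      * intros H. exists ((pi^-1)%g a), ((pi^-1)%g b). split; auto. split; rewrite permKV; auto.
      * intros [i [j [H [-> ->]]]]. rewrite !permK. auto.
    + intros [G1 G2]. split.
      * intros c0 c Hc.
        destruct (G1 c0 (fun k => c (pi k))) as [K1 K2].
        { intros t Ht. etransitivity; [|exact (Hc t Ht)]. f_equal.
          rewrite [in RHS](reindex_inj (@perm_inj _ pi)). apply eq_bigr. intros k _.
          unfold pvec. rewrite permK. reflexivity. }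
        split; auto. intros k. rewrite -(permKV pi k). apply K2.
      * intros i j Hij. unfold pvec. apply G2. intros E. apply Hij.
        apply (@perm_inj _ (pi^-1)%g). exact E.
    + intros [G1 G2]. split.
      * intros c Hc k.
        assert (K := G1 (fun k => c (pi k))).
        rewrite -(permKV pi k). refine (K _ _).
        intros t Ht. etransitivity; [|exact (Hc t Ht)].
        rewrite [in RHS](reindex_inj (@perm_inj _ pi)). apply eq_bigr. intros m _.
        unfold pvec. rewrite permK. reflexivity.
      * intros i j Hij. unfold pvec. apply G2. intros E. apply Hij.
        apply (@perm_inj _ (pi^-1)%g). exact E.
Qed.
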